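(* Let $n$ be a positive integer. There is a cardinal $\kappa$ such that every coalgebraic modal logic over $Q_n$ whose set $\Lambda$ of unary predicate liftings contains all $\lambda^{p,r,\hat A}$ ($p\in[0,1]$, $r\in\mathbb{R}$, $\hat A\in\mathrm{SA}_n$), and which has negation and conjunctions of all cardinalities less than $\kappa$, is expressive: for any $Q_n$-coalgebras $(X,\gamma)$, $(Y,\delta)$ and states $x\in X$, $y\in Y$ that are not behaviourally equivalent, there is a formula $\varphi$ with $x\in[\![\varphi]\!]_{X,\gamma}$ and $y\notin[\![\varphi]\!]_{Y,\delta}$.
   Context: $D$ is the finite distribution functor: $D(X)=\{d:X\to[0,1]\mid d\text{ has finite support},\ \sum_xd(x)=1\}$, $D(f)(d)(y)=\sum_{x:\,f(x)=y}d(x)$. $\mathrm{SA}_n$ is the set of self-adjoint operators on an $n$-dimensional complex Hilbert space; $Q_n(X)=D(\mathbb{R}\times X)^{\mathrm{SA}_n}$, acting on morphisms by postcomposition with $D(\mathrm{id}_\mathbb{R}\times f)$. $\lambda^{p,r,\hat A}_X(U)=\{f\in Q_n(X)\mid\sum_{u\in U}f(\hat A)(r,u)=p\}$. A unary predicate lifting for $Q_n$ is a family $\lambda_X:\mathcal{P}(X)\to\mathcal{P}(Q_nX)$ with $(Q_nf)^{-1}\lambda_Y(V)=\lambda_X(f^{-1}V)$. The coalgebraic modal logic with liftings $\Lambda$ and conjunction bound $\kappa$ has formulae $\top$, $\neg\varphi$, $\bigwedge_{i\in I}\varphi_i$ ($0<|I|<\kappa$), and $[\lambda]\varphi$ for $\lambda\in\Lambda$;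 on a coalgebra $(X,\gamma:X\to Q_nX)$, $[\![\top]\!]=X$, $\neg$ is complement, $\bigwedge$ is intersection, and $[\![[\lambda]\varphi]\!]_{X,\gamma}=\gamma^{-1}(\lambda_X([\![\varphi]\!]_{X,\gamma}))$. States $x\in X$, $y\in Y$ are behaviourally equivalent if there are a coalgebra $(Z,\zeta)$ and coalgebra morphisms $g:X\to Z$, $g':Y\to Z$ (maps with $\zeta\circ g=Q_ng\circ\gamma$, etc.) with $g(x)=g'(y)$. *)

(* Defs.v *)
From Stdlib Require Import Reals List.
From Stdlib Require Vectors.Fin.
Set Warnings "-stdlib-vector".
Import ListNotations.
Open Scope R_scope.

Record C : Type := mkC { Re : R ; Im : R }.
Definition Cconj (z : C) : C := mkC (Re z) (- Im z).

(** An operator on an n-dimensional complex Hilbert space, written as a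
    matrix in an orthonormal basis; self-adjoint = Hermitian matrix. *)
Definition Mat (n : nat) : Type := Fin.t n -> Fin.t n -> C.
Definition self_adjoint {n : nat} (M : Mat n) : Prop :=
  forall i j, M i j = Cconj (M j i).
Definition SA (n : nat) : Type := { M : Mat n | self_adjoint M }.

Definition sumR {A : Type} (g : A -> R) (l : list A) : R :=
  fold_right Rplus 0 (map g l).

Definition fin_sum {A : Type} (P : A -> Prop) (g : A -> R) (s : R) : Prop :=
  exists l : list A, NoDup l /\ (forall a, In a l <-> P a) /\ s = sumR g l.

Definition is_dist {A : Type} (d : A -> R) : Prop :=
  (forall a, 0 <= d a <= 1) /\
  exists l : list A, NoDup l /\ (forall a, d a <> 0 -> In a l) /\ sumR d l = 1.

Definition Dist (A : Type) : Type := { d : A -> R | is_dist d }.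

Definition dval {A : Type} (d : Dist A) : A -> R := proj1_sig d.

(** [D(f)(d) = d'], i.e. d'(b) = sum_{a : f a = b} d(a)  (the sum ranges over
    the finite support of d; zero terms do not matter). *)
Definition Dmap_rel {A B : Type} (f : A -> B) (d : Dist A) (d' : Dist B) : Prop :=
  forall b, fin_sum (fun a => dval d a <> 0 /\ f a = b) (dval d) (dval d' b).

Definition Q (n : nat) (X : Type) : Type := SA n -> Dist (R * X).

Definition Qmap_rel {n : nat} {X Y : Type} (f : X -> Y) (q : Q n X) (q' : Q n Y) : Prop :=
  forall A : SA n, Dmap_rel (fun v : R * X => (fst v, f (snd v))) (q A) (q' A).

Definition preimage {X Y : Type} (f : X -> Y) (V : Y -> Prop) : X -> Prop :=
  fun x => V (f x).

Record lifting (n : nat) : Type := mkLifting {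
  lift_fun : forall X : Type, (X -> Prop) -> (Q n X -> Prop);
  lift_natural : forall (X Y : Type) (f : X -> Y) (V : Y -> Prop) (q : Q n X) (q' : Q n Y),
      Qmap_rel f q q' -> (lift_fun Y V q' <-> lift_fun X (preimage f V) q)
}.
Arguments lift_fun {n} _ _ _ _.

Definition lambda_pra {n : nat} (p r : R) (A : SA n) (X : Type) (U : X -> Prop) (q : Q n X) : Prop :=
  fin_sum (fun u => U u /\ dval (q A) (r, u) <> 0) (fun u => dval (q A) (r, u)) p.

Definition card_le (I K : Type) : Prop :=
  exists f : I -> K, forall a b, f a = f b -> a = b.
Definition card_lt (I K : Type) : Prop := card_le I K /\ ~ card_le K I.

Inductive form (K L : Type) : Type :=
| FTop : form K L
| FNeg : form K L -> form K L
| FConj : forall I : Type, inhabited I -> card_lt I K -> (I -> form K L) -> form K L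
| FBox : L -> form K L -> form K L.
Arguments FTop {K L}.
Arguments FNeg {K L} _.
Arguments FConj {K L} I _ _ _.
Arguments FBox {K L} _ _.

Fixpoint sem {n : nat} {K L : Type} (lift : L -> lifting n)
    {X : Type} (gamma : X -> Q n X) (phi : form K L) : X -> Prop :=
  match phi with
  | @FTop _ _ => fun _ => True
  | FNeg psi => fun x => ~ sem lift gamma psi x
  | @FConj _ _ J _ _ f => fun x => forall i, sem lift gamma (f i) x
  | FBox l psi => fun x => lift_fun (lift l) X (sem lift gamma psi) (gamma x)
  end.

Definition coalg_morph {n : nat} {X Z : Type} (gamma : X -> Q n X) (zeta : Z -> Q n Z)
    (g : X -> Z) : Prop :=
  forall x, Qmap_rel g (gamma x) (zeta (g x)).

Definition beh_equiv {n : nat} {X Y : Type} (gamma : X -> Q n X) (delta : Y -> Q n Y)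
    (x : X) (y : Y) : Prop :=
  exists (Z : Type) (zeta : Z -> Q n Z) (g : X -> Z) (g' : Y -> Z),
    coalg_morph gamma zeta g /\ coalg_morph delta zeta g' /\ g x = g' y.

(* Main.v *)
Require Import Defs.
From Stdlib Require Import Reals.
From Stdlib Require Import List Lra Lia Permutation Classical ClassicalEpsilon FunctionalExtensionality PropExtensionality ProofIrrelevance.
Import ListNotations.
Open Scope R_scope.

Definition dec (P : Prop) : bool := if excluded_middle_informative P then true else false.
Lemma dec_true (P : Prop) : dec P = true <-> P.
Proof. unfold dec; destruct (excluded_middle_informative P); split; intros; auto; try discriminate; contradiction. Qed.
Lemma dec_T (P : Prop) : P -> dec P = true.
Proof. intros; apply dec_true; auto. Qed.
Lemma dec_F (P : Prop) : ~ P -> dec P = false.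
Proof. unfold dec; destruct (excluded_middle_informative P); auto; contradiction. Qed.

Lemma sumR_cons {A} (g : A -> R) a l : sumR g (a :: l) = g a + sumR g l.
Proof. reflexivity. Qed.
Lemma sumR_nil {A} (g : A -> R) : sumR g [] = 0.
Proof. reflexivity. Qed.
Lemma sumR_app {A} (g : A -> R) (l1 l2 : list A) : sumR g (l1 ++ l2) = sumR g l1 + sumR g l2.
Proof. induction l1; simpl app. rewrite sumR_nil; lra. rewrite !sumR_cons, IHl1; lra. Qed.
Lemma sumR_perm {A} (g : A -> R) l l' : Permutation l l' -> sumR g l = sumR g l'.
Proof. induction 1; rewrite ?sumR_cons; lra. Qed.
Lemma filter_cons' {A} (p : A -> bool) a l : filter p (a :: l) = if p a then a :: filter p l else filter p l.
Proof. reflexivity. Qed.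

Lemma fin_sum_unique {A} (P : A -> Prop) g s1 s2 : fin_sum P g s1 -> fin_sum P g s2 -> s1 = s2.
Proof.
  intros [l1 [N1 [I1 E1]]] [l2 [N2 [I2 E2]]]; subst.
  apply sumR_perm, NoDup_Permutation; auto.
  intro x; rewrite I1, I2; tauto.
Qed.

Lemma fin_sum_filter {A} (P : A -> Prop) g l : NoDup l -> (forall a, P a -> In a l) ->
  fin_sum P g (sumR g (filter (fun a => dec (P a)) l)).
Proof.
  intros N H. exists (filter (fun a => dec (P a)) l). split; [apply NoDup_filter; auto|]. split; [|reflexivity].
  intro a; rewrite filter_In, dec_true; split; [tauto|]. intro p; split; auto.
Qed.

Lemma sumR_nonneg {A} (g : A -> R) l : (forall a, 0 <= g a) -> 0 <= sumR g l.
Proof. intros H; induction l; [rewrite sumR_nil; lra | rewrite sumR_cons; specialize (H a); lra]. Qed.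

Lemma sumR_incl_le {A} (g : A -> R) l' : forall l, (forall a, 0 <= g a) -> NoDup l' -> incl l' l -> sumR g l' <= sumR g l.
Proof.
  induction l' as [|a l' IH]; intros l Hg N Hi.
  - rewrite sumR_nil; apply sumR_nonneg; auto.
  - inversion N as [|? ? Hnin Nd]; subst.
    assert (Ha : In a l) by (apply Hi; left; auto).
    destruct (in_split _ _ Ha) as [l1 [l2 ->]].
    rewrite sumR_cons, sumR_app, sumR_cons.
    assert (Hle : sumR g l' <= sumR g (l1 ++ l2)).
    { apply IH; auto. intros x Hx. assert (Hx' : In x (l1 ++ a :: l2)) by (apply Hi; right; auto).
      apply in_app_or in Hx'. apply in_or_app. destruct Hx' as [H|[H|H]]; auto. subst; contradiction. }
    rewrite sumR_app in Hle. lra.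
Qed.

Lemma fin_sum_bound {A} (d : Dist A) (P : A -> Prop) s : (forall a, P a -> dval d a <> 0) -> fin_sum P (dval d) s -> 0 <= s <= 1.
Proof.
  intros HP [l' [N' [I' ->]]].
  destruct d as [d [Hb [l [N [Hs E]]]]]; unfold dval in *; simpl in *.
  split. apply sumR_nonneg; intro a; apply Hb.
  rewrite <- E. apply sumR_incl_le; auto. intro a; apply Hb.
  intros a Ha. apply Hs, HP, I', Ha.
Qed.

Lemma fin_sum_reindex {A B} (Q : A -> Prop) (P : B -> Prop) (g : A -> R) (g' : B -> R) (h : A -> B) s :
  fin_sum Q g s ->
  (forall a b, Q a -> Q b -> h a = h b -> a = b) ->
  (forall b, P b <-> exists a, Q a /\ h a = b) ->
  (forall a, Q a -> g' (h a) = g a) ->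
  fin_sum P g' s.
Proof.
  intros [l [N [I ->]]] Hinj HP Hg.
  assert (Hl : forall a, In a l -> Q a) by (intro; apply I).
  exists (map h l). split; [|split].
  - clear HP Hg I. induction l as [|a l IH]; simpl; constructor.
    + inversion N; subst. intro Hin. apply in_map_iff in Hin as [a' [E Hin']].
      assert (a' = a) by (apply Hinj; auto; apply Hl; simpl; auto). subst; contradiction.
    + inversion N; subst. apply IH; auto. intros; apply Hl; simpl; auto.
  - intro b. rewrite HP, in_map_iff. split.
    + intros [a [H1 H2]]. exists a. split; [apply I|]; auto.
    + intros [a [H1 H2]]. exists a. split; [|apply I]; auto.
  - clear - Hl Hg. induction l; [reflexivity|]. simpl map. rewrite !sumR_cons.
    rewrite IHl by (intros; apply Hl; simpl; auto). rewrite Hg by (apply Hl; simpl; auto). reflexivity.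
Qed.

Lemma sumR_ext {A} (g1 g2 : A -> R) l : (forall a, In a l -> g1 a = g2 a) -> sumR g1 l = sumR g2 l.
Proof.
  induction l; intros H; [reflexivity|]. rewrite !sumR_cons. rewrite H by (simpl; auto).
  rewrite IHl; auto. intros; apply H; simpl; auto.
Qed.
Lemma sumR_plus {A} (h1 h2 : A -> R) l : sumR (fun b => h1 b + h2 b) l = sumR h1 l + sumR h2 l.
Proof. induction l; [rewrite !sumR_nil; lra|]. rewrite !sumR_cons, IHl; lra. Qed.
Lemma sumR_zero {A} (l : list A) : sumR (fun _ => 0) l = 0.
Proof. induction l; [reflexivity|]. rewrite sumR_cons, IHl; lra. Qed.
Lemma sumR_single {A} (c : A) v l : NoDup l -> In c l -> sumR (fun b => if dec (c = b) then v else 0) l = v.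
Proof.
  induction l as [|a l IH]; intros N Hc; [destruct Hc|]. inversion N as [|? ? Hnin Nd]; subst.
  rewrite sumR_cons. destruct Hc as [<-|Hc].
  - rewrite dec_T by auto. rewrite (sumR_ext _ (fun _ => 0)). rewrite sumR_zero; lra.
    intros b Hb. rewrite dec_F; auto. intros ->; contradiction.
  - rewrite dec_F. rewrite IH; auto; lra. intros ->; contradiction.
Qed.

Lemma regroup {A B} (g : A -> R) (f : A -> B) (lB : list B) : NoDup lB -> forall l,
  (forall a, In a l -> g a <> 0 -> In (f a) lB) ->
  sumR g l = sumR (fun b => sumR g (filter (fun a => dec (g a <> 0 /\ f a = b)) l)) lB.
Proof.
  intros NB l; induction l as [|a l IH]; intros H.
  - rewrite sumR_nil. rewrite (sumR_ext _ (fun _ => 0)). symmetry; apply sumR_zero. intros; reflexivity.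
  - rewrite sumR_cons. rewrite IH by (intros; apply H; simpl; auto).
    destruct (classic (g a = 0)) as [Z|NZ].
    + rewrite Z, Rplus_0_l. apply sumR_ext; intros b _. rewrite filter_cons', dec_F; auto. tauto.
    + symmetry. rewrite (sumR_ext _ (fun b => (if dec (f a = b) then g a else 0) +
               sumR g (filter (fun a => dec (g a <> 0 /\ f a = b)) l))).
      * rewrite sumR_plus, sumR_single; auto. apply H; simpl; auto.
      * intros b _. rewrite filter_cons'. destruct (classic (f a = b)).
        -- rewrite !dec_T; auto. 
        -- rewrite !dec_F; auto. lra. tauto.
Qed.

Definition eqdec {A} : forall x y : A, {x = y} + {x <> y} := fun x y => excluded_middle_informative (x = y).

Lemma Dmap_exists {A B} (f : A -> B) (d : Dist A) : exists d' : Dist B, Dmap_rel f d d'.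
Proof.
  destruct (proj2_sig d) as [Hb [l [N [Hs E]]]]. fold (dval d) in *.
  pose (dm := fun b => sumR (dval d) (filter (fun a => dec (dval d a <> 0 /\ f a = b)) l)).
  assert (Hd : is_dist dm).
  { split; [intro b; split|].
    - apply sumR_nonneg; intro; apply Hb.
    - unfold dm. rewrite <- E. apply sumR_incl_le. intro; apply Hb. apply NoDup_filter; auto.
      intros a Ha; apply filter_In in Ha; tauto.
    - exists (nodup eqdec (map f l)). split; [apply NoDup_nodup|]. split.
      + intros b Hb'. unfold dm in Hb'.
        destruct (filter (fun a => dec (dval d a <> 0 /\ f a = b)) l) as [|a0 rest] eqn:F.
        * rewrite sumR_nil in Hb'. contradiction.
        * assert (Ha0 : In a0 (filter (fun a => dec (dval d a <> 0 /\ f a = b)) l)) by (rewrite F; left; auto).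
          apply filter_In in Ha0 as [Ha0 Hd0]. apply dec_true in Hd0 as [_ <-].
          apply nodup_In, in_map; auto.
      + rewrite <- E. symmetry. unfold dm. apply regroup. apply NoDup_nodup.
        intros a Ha _. apply nodup_In, in_map; auto. }
  exists (exist _ dm Hd). intro b. unfold dval at 3; simpl. unfold dm.
  apply fin_sum_filter; auto. intros a [Ha _]; auto.
Qed.

Lemma card_lt_fin (m : nat) : card_lt {k : nat | (k < m)%nat} nat.
Proof.
  split.
  - exists (@proj1_sig _ _). intros [a Ha] [b Hb]; simpl; intros ->. f_equal; apply proof_irrelevance.
  - intros [h Hh].
    assert (Nd : NoDup (map (fun i => proj1_sig (h i)) (seq 0 (S m)))).
    { apply FinFun.Injective_map_NoDup. red; intros i j E. apply Hh.
      destruct (h i) as [x px], (h j) as [y py]; simpl in E; subst y; f_equal; apply proof_irrelevance.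
      apply seq_NoDup. }
    apply NoDup_incl_length with (l' := seq 0 m) in Nd.
    + rewrite length_map, !length_seq in Nd. lia.
    + intros x Hx. apply in_map_iff in Hx as [i [<- _]]. apply in_seq. destruct (h i); simpl; lia.
Qed.

Definition th {n : nat} {L : Type} (lift : L -> lifting n) {X : Type} (g : X -> Q n X) (u : X)
  : form nat L -> Prop := fun phi => sem lift g phi u.

Lemma exists_char_formula {n L} (lift : L -> lifting n) {X1 X2} (g1 : X1 -> Q n X1) (g2 : X2 -> Q n X2)
  (l1 : list X1) (l2 : list X2) (z : form nat L -> Prop) :
  exists phi : form nat L,
    (forall u, In u l1 -> (sem lift g1 phi u <-> th lift g1 u = z)) /\
    (forall u, In u l2 -> (sem lift g2 phi u <-> th lift g2 u = z)).
Proof.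
  destruct (classic ((exists u, th lift g1 u = z) \/ (exists u, th lift g2 u = z))) as [Hex|Hno].
  2: { exists (FNeg FTop). split; intros u _; simpl; split; [tauto| intro E; exfalso; apply Hno; eauto
        | tauto | intro E; exfalso; apply Hno; eauto]. }
  assert (Hz : z FTop /\ forall chi, z (FNeg chi) <-> ~ z chi).
  { destruct Hex as [[u <-]|[u <-]]; unfold th; simpl; (split; [exact I| intros; tauto]). }
  pose (inh := inhabits (@FTop nat L)).
  assert (Gen : forall (X : Type) (g : X -> Q n X) (u : X), exists chi : form nat L,
            z chi /\ (th lift g u <> z -> ~ sem lift g chi u)).
  { intros X g u. destruct (classic (th lift g u = z)) as [E|NE].
    - exists FTop. split; [apply Hz| tauto].
    - assert (Hc : exists chi, ~ (th lift g u chi <-> z chi)).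
      { apply not_all_ex_not. intro Hall. apply NE. apply functional_extensionality; intro chi;
        apply propositional_extensionality; apply Hall. }
      destruct Hc as [chi Hchi]. unfold th in Hchi.
      destruct (classic (z chi)) as [Zc|Zc].
      + exists chi. split; auto. intros _ Hs. tauto.
      + exists (FNeg chi). split. apply Hz; auto. simpl. intros _ Hn. tauto. }
  pose (c1 := fun u : X1 => epsilon inh (fun chi => z chi /\ (th lift g1 u <> z -> ~ sem lift g1 chi u))).
  pose (c2 := fun u : X2 => epsilon inh (fun chi => z chi /\ (th lift g2 u <> z -> ~ sem lift g2 chi u))).
  assert (Hc1 : forall u, z (c1 u) /\ (th lift g1 u <> z -> ~ sem lift g1 (c1 u) u))
    by (intro u; apply epsilon_spec, Gen).
  assert (Hc2 : forall u, z (c2 u) /\ (th lift g2 u <> z -> ~ sem lift g2 (c2 u) u))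
    by (intro u; apply epsilon_spec, Gen).
  pose (chis := FTop :: map c1 l1 ++ map c2 l2).
  assert (Hall : forall chi, In chi chis -> z chi).
  { intros chi Hin. destruct Hin as [<-|Hin]; [apply Hz|]. apply in_app_or in Hin as [Hin|Hin];
    apply in_map_iff in Hin as [u [<- _]]; [apply Hc1|apply Hc2]. }
  pose (m := length chis).
  assert (Hm : (0 < m)%nat) by (unfold m, chis; simpl; lia).
  pose (phi := FConj {k : nat | (k < m)%nat} (inhabits (exist _ 0%nat Hm)) (card_lt_fin m)
                 (fun k => nth (proj1_sig k) chis FTop)).
  assert (Key : forall (X : Type) (g : X -> Q n X) (c : X -> form nat L) (l : list X),
     (forall u, th lift g u <> z -> ~ sem lift g (c u) u) ->
     (forall u, In u l -> In (c u) chis) ->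
     forall u, In u l -> (sem lift g phi u <-> th lift g u = z)).
  { intros X g c l Hc Hin u Hu. unfold phi; cbn [sem]. split.
    - intro Hs. apply NNPP; intro NE. apply (Hc u NE).
      destruct (In_nth chis (c u) FTop (Hin u Hu)) as [k [Hk Hnth]].
      rewrite <- Hnth. exact (Hs (exist _ k Hk)).
    - intros E [k Hk]. simpl. assert (Hz' : z (nth k chis FTop)) by (apply Hall, nth_In; auto).
      rewrite <- E in Hz'. exact Hz'. }
  exists phi. split; intros u Hu.
  - apply (Key _ g1 c1 l1); auto. intros; apply Hc1; auto.
    intros v Hv. right. apply in_or_app; left; apply in_map; auto.
  - apply (Key _ g2 c2 l2); auto. intros; apply Hc2; auto.
    intros v Hv. right. apply in_or_app; right; apply in_map; auto.
Qed.

Lemma translate {X Z : Type} (d : Dist (R * X)) (t : X -> Z) (Phi : X -> Prop) (r : R) (z : Z) S :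
  (forall u, dval d (r, u) <> 0 -> (Phi u <-> t u = z)) ->
  (fin_sum (fun a => dval d a <> 0 /\ (fst a, t (snd a)) = (r, z)) (dval d) S <->
   fin_sum (fun u => Phi u /\ dval d (r, u) <> 0) (fun u => dval d (r, u)) S).
Proof.
  intros HPhi. split; intro H.
  - apply (fin_sum_reindex _ _ _ _ snd _ H).
    + intros [ra ua] [rb ub] [_ Ea] [_ Eb]; simpl in *. intros ->.
      injection Ea as -> _. injection Eb as -> _. reflexivity.
    + intro u. split.
      * intros [Pu Du]. exists (r, u). simpl. split; auto. split; auto. f_equal. apply HPhi; auto.
      * intros [[ra ua] [[Da Ea] <-]]. simpl in *. injection Ea as -> Ea. split; auto. apply HPhi; auto.
    + intros [ra ua] [_ Ea]; simpl in *. injection Ea as -> _. reflexivity.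
  - apply (fin_sum_reindex _ _ _ _ (fun u => (r, u)) _ H).
    + intros a b _ _ E. injection E; auto.
    + intros [ra ua]. simpl. split.
      * intros [Da Ea]. injection Ea as -> Ea. exists ua. split; auto. split; auto. apply HPhi; auto.
      * intros [u [[Pu Du] Eu]]. injection Eu as <- <-. split; auto. f_equal. apply HPhi; auto.
    + intros; reflexivity.
Qed.

Lemma key {n L} (lift : L -> lifting n)
  (HL : forall (p r : R) (A : SA n), 0 <= p <= 1 -> exists l : L, forall (X : Type) (U : X -> Prop) (q : Q n X),
           lift_fun (lift l) X U q <-> lambda_pra p r A X U q)
  {X1 X2} (g1 : X1 -> Q n X1) (g2 : X2 -> Q n X2) (s1 : X1) (s2 : X2) :
  th lift g1 s1 = th lift g2 s2 ->
  forall A b S,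
   fin_sum (fun a => dval (g2 s2 A) a <> 0 /\ (fst a, th lift g2 (snd a)) = b) (dval (g2 s2 A)) S ->
   fin_sum (fun a => dval (g1 s1 A) a <> 0 /\ (fst a, th lift g1 (snd a)) = b) (dval (g1 s1 A)) S.
Proof.
  intros E A [r z] S H2.
  destruct (proj2_sig (g1 s1 A)) as [_ [k1 [_ [S1 _]]]].
  destruct (proj2_sig (g2 s2 A)) as [_ [k2 [_ [S2 _]]]].
  destruct (exists_char_formula lift g1 g2 (map snd k1) (map snd k2) z) as [phi [P1 P2]].
  assert (B : 0 <= S <= 1) by (eapply fin_sum_bound; [|exact H2]; intros a [Ha _]; exact Ha).
  destruct (HL S r A B) as [l Hl].
  assert (H2' : lambda_pra S r A X2 (sem lift g2 phi) (g2 s2)).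
  { assert (Q2 : forall u, dval (g2 s2 A) (r, u) <> 0 -> (sem lift g2 phi u <-> th lift g2 u = z)).
    { intros u Hu. apply P2. apply in_map_iff. exists (r,u); split; auto. }
    unfold lambda_pra. apply (proj1 (translate _ _ _ r z S Q2)); auto. }
  assert (T2 : th lift g2 s2 (FBox l phi)) by (unfold th; simpl; apply Hl; exact H2').
  rewrite <- E in T2. unfold th in T2; simpl in T2. apply Hl in T2.
  assert (Q1 : forall u, dval (g1 s1 A) (r, u) <> 0 -> (sem lift g1 phi u <-> th lift g1 u = z)).
  { intros u Hu. apply P1. apply in_map_iff. exists (r,u); split; auto. }
  apply (proj2 (translate _ _ (sem lift g1 phi) r z S Q1)); auto.
Qed.

Lemma Dist_inhabited {A} (a0 : A) : inhabited (Dist A).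
Proof.
  constructor. exists (fun a => if excluded_middle_informative (a = a0) then 1 else 0).
  split. intro a; destruct (excluded_middle_informative _); lra.
  exists [a0]. split. constructor; [intros []| constructor]. split.
  - intros a H; destruct (excluded_middle_informative (a = a0)); [left; auto| exfalso; apply H; reflexivity].
  - unfold sumR; simpl; destruct (excluded_middle_informative (a0 = a0)); [lra| contradiction].
Qed.

Theorem mainTheorem15 (n : nat) (hn : (0 < n)%nat) :
  exists K : Type,
    forall (L : Type) (lift : L -> lifting n),
      (forall (p r : R) (A : SA n), 0 <= p <= 1 ->
         exists l : L, forall (X : Type) (U : X -> Prop) (q : Q n X),
           lift_fun (lift l) X U q <-> lambda_pra p r A X U q) ->
      forall (X : Type) (gamma : X -> Q n X) (Y : Type) (delta : Y -> Q n Y)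
             (x : X) (y : Y),
        ~ beh_equiv gamma delta x y ->
        exists phi : form K L, sem lift gamma phi x /\ ~ sem lift delta phi y.
Proof.
  exists nat. intros L lift HL X gamma Y delta x y Hnb.
  apply NNPP; intro Hno. apply Hnb.
  assert (Heq : th lift gamma x = th lift delta y).
  { apply functional_extensionality; intro phi. apply propositional_extensionality.
    assert (Himp : forall psi : form nat L, sem lift gamma psi x -> sem lift delta psi y).
    { intros psi Hs. apply NNPP; intro Hd. apply Hno; exists psi; auto. }
    unfold th. split; [apply Himp|]. intro Hd. apply NNPP; intro Hg. apply (Himp (FNeg phi) Hg Hd). }
  pose (Z := form nat L -> Prop).
  assert (inhD : inhabited (Dist (R * Z))) by exact (Dist_inhabited ((0:R), (fun _ : form nat L => True))).
  assert (inhQ : inhabited (Q n Z)) by (destruct inhD as [d0]; constructor; exact (fun _ => d0)).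
  pose (spec := fun (z : Z) (q : Q n Z) =>
    (exists x', th lift gamma x' = z /\ Qmap_rel (th lift gamma) (gamma x') q) \/
    (exists y', th lift delta y' = z /\ Qmap_rel (th lift delta) (delta y') q)).
  pose (zeta := fun z => epsilon inhQ (spec z)).
  assert (Img : forall (W : Type) (g : W -> Q n W) (w : W), exists q : Q n Z, Qmap_rel (th lift g) (g w) q).
  { intros W g w.
    exists (fun A => epsilon inhD (fun d' => Dmap_rel (fun v => (fst v, th lift g (snd v))) (g w A) d')).
    intro A. apply epsilon_spec. apply Dmap_exists. }
  assert (Tr : forall (W1 W2 : Type) (g1 : W1 -> Q n W1) (g2 : W2 -> Q n W2) w1 w2 (q : Q n Z),
     th lift g1 w1 = th lift g2 w2 -> Qmap_rel (th lift g2) (g2 w2) q -> Qmap_rel (th lift g1) (g1 w1) q).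
  { intros W1 W2 g1 g2 w1 w2 q E Hq A b. exact (key lift HL g1 g2 w1 w2 E A b _ (Hq A b)). }
  assert (M : forall (W : Type) (g : W -> Q n W) (w : W),
     spec (th lift g w) (zeta (th lift g w)) -> Qmap_rel (th lift g) (g w) (zeta (th lift g w))).
  { intros W g w Hs. destruct Hs as [[x'' [E Hq]]|[y'' [E Hq]]].
    - exact (Tr _ _ g gamma w x'' _ (eq_sym E) Hq).
    - exact (Tr _ _ g delta w y'' _ (eq_sym E) Hq). }
  exists Z, zeta, (th lift gamma), (th lift delta). split; [|split; [|exact Heq]].
  - intro x'. apply M. apply epsilon_spec. destruct (Img _ gamma x') as [q Hq]. exists q. left. exists x'; auto.
  - intro y'. apply M. apply epsilon_spec. destruct (Img _ delta y') as [q Hq]. exists q. right. exists y'; auto.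
Qed.
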